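(* Let $n\in\mathbb N$ and let $T:\mathbb C_n[z]\to\mathbb C[z]$ be a linear operator. Then $T$ preserves stability (i.e. $T(f)\in\mathcal H_1(\mathbb C)\cup\{0\}$ for every $f\in\mathcal H_1(\mathbb C)\cap\mathbb C_n[z]$) if and only if either (a) $T$ has range of dimension at most one and $T(f)=\alpha(f)P$ for $f\in\mathbb C_n[z]$, where $\alpha:\mathbb C_n[z]\to\mathbb C$ is a linear functional and $P\in\mathcal H_1(\mathbb C)$; or (b) $T[(z+w)^n]\in\mathcal H_2(\mathbb C)$.
   Context: $\mathbb C_n[z]$ is the space of complex polynomials of degree at most $n$. A polynomial $f\in\mathbb C[z_1,\dots,z_k]$ is stable if it is non-zero and $f(z_1,\dots,z_k)\neq0$ whenever $\Im z_j>0$ for all $j$; $\mathcal H_k(\mathbb C)$ denotes the set of stable polynomials in $k$ variables. $T$ is extended to polynomials in $z,w$ by $T(z^kw^\ell)=T(z^k)w^\ell$. *)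

(* Defs.v *)
From HB Require Import structures.
From mathcomp Require Import all_boot all_order all_algebra.
From mathcomp Require Import complex.
From mathcomp Require Import reals.
Set Implicit Arguments. Unset Strict Implicit. Unset Printing Implicit Defensive.
Import Order.TTheory GRing.Theory Num.Theory.
Local Open Scope ring_scope.

(* The complex numbers are modelled as R[i] for an arbitrary realType R
   (every realType is isomorphic to the real numbers). *)

Definition in_Cn (R : realType) (n : nat) (f : {poly R[i]}) : Prop :=
  (size f <= n.+1)%N.

Definition stable1 (R : realType) (f : {poly R[i]}) : Prop :=
  f != 0 /\ forall z : R[i], 0 < complex.Im z -> f.[z] != 0.

(* Bivariate polynomials in z, w are represented as {poly {poly R[i]}}:
   the outer variable is w, the coefficients are polynomials in z.
   Evaluation at (z, w) is (Q.[w%:P]).[z]. *)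
Definition stable2 (R : realType) (Q : {poly {poly R[i]}}) : Prop :=
  Q != 0 /\ forall z w : R[i], 0 < complex.Im z -> 0 < complex.Im w ->
    (Q.[w%:P]).[z] != 0.

(* T : C_n[z] -> C[z] linear: modelled as a function on {poly R[i]}
   which is linear on C_n[z]; its values outside C_n[z] are irrelevant. *)
Definition linear_on_Cn (R : realType) (n : nat) (V : lmodType R[i])
    (T : {poly R[i]} -> V) : Prop :=
  forall (a : R[i]) (f g : {poly R[i]}), in_Cn n f -> in_Cn n g ->
    T (a *: f + g) = a *: T f + T g.

(* Extension of T to polynomials in z, w: T(z^k w^l) = T(z^k) w^l,
   i.e. T acts on the z-coefficients of each power of w. *)
Definition Text (R : realType) (T : {poly R[i]} -> {poly R[i]})
    (Q : {poly {poly R[i]}}) : {poly {poly R[i]}} := map_poly T Q.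

(* (z + w)^n as an element of {poly {poly R[i]}} (outer 'X = w, inner 'X = z). *)
Definition zw_pow (R : realType) (n : nat) : {poly {poly R[i]}} :=
  ('X + ('X : {poly R[i]})%:P) ^+ n.

Definition preserves_stability (R : realType) (n : nat)
    (T : {poly R[i]} -> {poly R[i]}) : Prop :=
  forall f : {poly R[i]}, in_Cn n f -> stable1 f -> stable1 (T f) \/ T f = 0.

(* Main.v *)
Require Import Defs.
From HB Require Import structures.
From mathcomp Require Import all_boot all_order all_algebra.
From mathcomp Require Import complex.
From mathcomp Require Import reals.
From mathcomp Require Import ring lra zify.
From Stdlib Require Import Classical.
Set Implicit Arguments. Unset Strict Implicit. Unset Printing Implicit Defensive.
Import Order.TTheory GRing.Theory Num.Theory.
Import ComplexField Normc.
Local Open Scope ring_scope.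


Section Basics.
Variable R : realType.
Local Notation C := R[i].

Lemma ImD (x y : C) : complex.Im (x + y) = complex.Im x + complex.Im y.
Proof. by case: x; case: y. Qed.
Lemma ImN (x : C) : complex.Im (- x) = - complex.Im x.
Proof. by case: x. Qed.
Lemma ImB (x y : C) : complex.Im (x - y) = complex.Im x - complex.Im y.
Proof. by rewrite ImD ImN. Qed.
Lemma Im_i : complex.Im ('i%C : C) = 1.
Proof. by []. Qed.

Lemma uhp_neq0 (x : C) : 0 < complex.Im x -> x != 0.
Proof. by apply: contraTneq => ->; rewrite ltxx. Qed.

Lemma normc_ge0 (x : C) : 0 <= normc x.
Proof. by case: x => a b /=; rewrite sqrtr_ge0. Qed.

Lemma Im_le_normc (x : C) : complex.Im x <= normc x.
Proof.
case: x => a b /=.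
have h : b <= `|b| by rewrite ler_norm.
apply: (le_trans h); rewrite -sqrtr_sqr; apply: ler_wsqrtr.
by rewrite lerDr sqr_ge0.
Qed.

Lemma normcX (x : C) k : normc (x ^+ k) = normc x ^+ k.
Proof.
elim: k => [|k IH]; first by rewrite !expr0 normc1.
by rewrite !exprS normcM IH.
Qed.

Lemma normcD_ge (x y : C) : normc x - normc y <= normc (x + y).
Proof.
have := le_normcD (x + y) (- y); rewrite addrK normcN => h.
by rewrite lerBlDr.
Qed.

Lemma normc_gt0 (x : C) : x != 0 -> 0 < normc x.
Proof.
move=> nz; rewrite lt_def normc_ge0 andbT; apply/eqP => /eq0_normc.
by move/eqP: nz.
Qed.

End Basics.


Section Lin.
Variable R : realType.
Local Notation C := R[i].
Variable n : nat.
Variable T : {poly C} -> {poly C}.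
Hypothesis HT : linear_on_Cn n T.

Lemma Cn0 : in_Cn n (0 : {poly C}).
Proof. by rewrite /in_Cn size_poly0. Qed.
Lemma CnD (f g : {poly C}) : in_Cn n f -> in_Cn n g -> in_Cn n (f + g).
Proof. by rewrite /in_Cn => hf hg; apply: (leq_trans (size_polyD _ _)); rewrite geq_max hf hg. Qed.
Lemma CnZ (a : C) (f : {poly C}) : in_Cn n f -> in_Cn n (a *: f).
Proof. by rewrite /in_Cn => hf; apply: leq_trans (size_scale_leq _ _) hf. Qed.
Lemma CnN (f : {poly C}) : in_Cn n f -> in_Cn n (- f).
Proof. by rewrite -scaleN1r; apply: CnZ. Qed.
Lemma CnXn k : (k <= n)%N -> in_Cn n ('X^k : {poly C}).
Proof. by rewrite /in_Cn size_polyXn. Qed.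

Lemma T0 : T 0 = 0.
Proof.
have := HT 1 Cn0 Cn0; rewrite !scale1r addr0 => e.
by have := congr1 (fun x => x - T 0) e; rewrite subrr addrK => <-.
Qed.
Lemma TD f g : in_Cn n f -> in_Cn n g -> T (f + g) = T f + T g.
Proof. by move=> hf hg; have := HT 1 hf hg; rewrite !scale1r. Qed.
Lemma TZ a f : in_Cn n f -> T (a *: f) = a *: T f.
Proof. by move=> hf; have := HT a hf Cn0; rewrite !addr0 T0 addr0. Qed.

Lemma Tsum (I : Type) (r : seq I) (P : pred I) (F : I -> {poly C}) :
  (forall i, P i -> in_Cn n (F i)) ->
  T (\sum_(i <- r | P i) F i) = \sum_(i <- r | P i) T (F i).
Proof.
move=> hF.
suff [] : in_Cn n (\sum_(i <- r | P i) F i) /\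
  T (\sum_(i <- r | P i) F i) = \sum_(i <- r | P i) T (F i) by [].
elim/big_rec2: _ => [|i y x Pi [hx hT]]; first by split; [exact: Cn0 | exact: T0].
split; first by apply: CnD => //; apply: hF.
by rewrite TD ?hT //; apply: hF.
Qed.

Lemma Cnsum (I : Type) (r : seq I) (P : pred I) (F : I -> {poly C}) :
  (forall i, P i -> in_Cn n (F i)) -> in_Cn n (\sum_(i <- r | P i) F i).
Proof.
move=> hF; elim/big_rec: _ => [|i x Pi hx]; first exact: Cn0.
by apply: CnD => //; apply: hF.
Qed.

Lemma Cn_expand (h : {poly C}) : in_Cn n h ->
  h = \sum_(j < n.+1) h`_j *: 'X^j.
Proof.
move=> hh; rewrite -poly_def; apply/polyP => j; rewrite coef_poly.
case: ltnP => // hj.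
by move/leq_sizeP: hh => ->.
Qed.

Lemma T_eval (h : {poly C}) (z : C) : in_Cn n h ->
  (T h).[z] = \sum_(j < n.+1) h`_j * (T 'X^j).[z].
Proof.
move=> hh; rewrite {1}(Cn_expand hh) Tsum; last by move=> j _; apply: CnZ; apply: CnXn; rewrite -ltnS.
rewrite horner_sum; apply: eq_bigr => j _; rewrite TZ ?hornerZ //.
by apply: CnXn; rewrite -ltnS.
Qed.

End Lin.

Lemma coef_binom (S : comNzRingType) (c : S) n k :
  (('X + c%:P) ^+ n)`_k = c ^+ (n - k) *+ 'C(n, k).
Proof.
rewrite addrC exprDn coef_sum.
case: (ltnP n k) => hk.
  rewrite bin_small // mulr0n; apply: big1 => i _.
  rewrite coefMn -polyC_exp coefCM coefXn.
  have : k != i by apply: contraTneq hk => ->; rewrite -leqNgt -ltnS.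
  by move/negbTE => ->; rewrite mulr0 mul0rn.
rewrite (bigD1 (Ordinal (hk : (k < n.+1)%N))) //= big1 ?addr0.
  by rewrite coefMn -polyC_exp coefCM coefXn eqxx mulr1.
move=> i /eqP ne; rewrite coefMn -polyC_exp coefCM coefXn.
have : k != i by apply/eqP => e; apply: ne; apply: val_inj => /=.
by move/negbTE => ->; rewrite mulr0 mul0rn.
Qed.


Definition pair (R : realType) (n : nat) (f g : {poly R[i]}) : R[i] :=
  \sum_(k < n.+1) f`_(n - k) * g`_k / ('C(n, k))%:R.

Section Q.
Variable R : realType.
Local Notation C := R[i].
Variable n : nat.
Variable T : {poly C} -> {poly C}.
Hypothesis HT : linear_on_Cn n T.

Local Notation Qp := (Text T (zw_pow R n)).

Lemma Q_coef k : Qp`_k = ('C(n,k))%:R *: T ('X^(n-k)).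
Proof.
rewrite /Text coef_map_id0 ?(T0 HT) // /zw_pow coef_binom -scaler_nat.
by rewrite (TZ HT) //; apply: CnXn; apply: leq_subr.
Qed.

Lemma size_Q : (size Qp <= n.+1)%N.
Proof.
rewrite /Text; apply: (leq_trans (size_poly _ _)).
apply: (leq_trans (size_poly_exp_leq _ _)).
by rewrite size_XaddC mul1n.
Qed.

Lemma Q_eval (z w : C) :
  (Qp.[w%:P]).[z] = \sum_(k < n.+1) ('C(n,k)%:R * w ^+ k) * (T 'X^(n-k)).[z].
Proof.
rewrite (horner_coef_wide _ size_Q) horner_sum; apply: eq_bigr => k _.
rewrite -polyC_exp hornerM hornerC Q_coef hornerZ; ring.
Qed.

Definition gz (z : C) : {poly C} :=
  \poly_(k < n.+1) ('C(n,k)%:R * (T 'X^(n-k)).[z]).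

Lemma gz_eval z w : (gz z).[w] = (Qp.[w%:P]).[z].
Proof.
rewrite Q_eval /gz horner_poly; apply: eq_bigr => k _; ring.
Qed.

Lemma size_gz z : (size (gz z) <= n.+1)%N.
Proof. exact: size_poly. Qed.

Lemma binC_neq0 (k : 'I_n.+1) : ('C(n, k))%:R != 0 :> C.
Proof. by rewrite pnatr_eq0 -lt0n bin_gt0 -ltnS. Qed.

Lemma pair_T (h : {poly C}) z : in_Cn n h -> (T h).[z] = pair n h (gz z).
Proof.
move=> hh; rewrite (T_eval HT) // /pair (reindex_inj rev_ord_inj) /=.
apply: eq_bigr => k _; rewrite /gz coef_poly ltn_ord subSS.
have hk : (n - k <= n)%N by apply: leq_subr.
have := binC_neq0 k => hc.
by rewrite [_ * (_ * _)]mulrCA -mulrA mulrCA divff // mulr1.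
Qed.

Lemma Q_T (z w : C) : (Qp.[w%:P]).[z] = (T (('X + w%:P) ^+ n)).[z].
Proof.
rewrite Q_eval (T_eval HT); last first.
  by rewrite /in_Cn; apply: (leq_trans (size_poly_exp_leq _ _)); rewrite size_XaddC mul1n.
rewrite (reindex_inj rev_ord_inj) /=; apply: eq_bigr => k _.
rewrite subSS coef_binom.
have hk : (k <= n)%N by rewrite -ltnS.
by rewrite subKn // bin_sub // mulr_natl.
Qed.

End Q.


Section Gen.
Variable R : realType.
Local Notation C := R[i].

Lemma stable_of_vals (p : {poly C}) :
  (forall z : C, 0 < complex.Im z -> p.[z] != 0) -> stable1 p.
Proof.
move=> h; split => //; apply/eqP => p0.
have hi : (0 : R) < complex.Im ('i%C : C) by rewrite /= ltr01.
by have := h _ hi; rewrite p0 horner0 eqxx.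
Qed.

Lemma XwN_vals n (w : C) : 0 < complex.Im w ->
  forall z : C, 0 < complex.Im z -> (('X + w%:P) ^+ n).[z] != 0.
Proof.
move=> hw z hz; rewrite horner_exp hornerD hornerX hornerC expf_neq0 //.
by apply: uhp_neq0; rewrite ImD addr_gt0.
Qed.

Lemma XwN_Cn n (w : C) : in_Cn n (('X + w%:P) ^+ n).
Proof. by rewrite /in_Cn; apply: (leq_trans (size_poly_exp_leq _ _)); rewrite size_XaddC mul1n. Qed.

Lemma normc_real (a : R) : normc (a%:C)%C = `|a|.
Proof. by rewrite /normc /= expr0n /= addr0 sqrtr_sqr. Qed.

Lemma normc_sum (I : Type) (r : seq I) (P : pred I) (F : I -> C) :
  normc (\sum_(i <- r | P i) F i) <= \sum_(i <- r | P i) normc (F i).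
Proof.
elim/big_rec2: _ => [|i y x _ hx]; first by rewrite normc0.
by apply: (le_trans (le_normcD _ _)); rewrite lerD2l.
Qed.

End Gen.

Section Hard.
Variable R : realType.
Local Notation C := R[i].
Variable n : nat.
Variable T : {poly C} -> {poly C}.
Hypothesis HT : linear_on_Cn n T.
Hypothesis Hpres : preserves_stability n T.
Local Notation Qp := (Text T (zw_pow R n)).

Lemma caseA : (forall w : C, 0 < complex.Im w -> T (('X + w%:P) ^+ n) != 0) ->
  stable2 Qp.
Proof.
move=> hw.
have key : forall z w : C, 0 < complex.Im z -> 0 < complex.Im w ->
    (Qp.[w%:P]).[z] != 0.
  move=> z w hz hwi; rewrite (Q_T HT).
  have := Hpres (XwN_Cn n w) (stable_of_vals (XwN_vals n hwi)).
  case => [[_ hs]|h0]; first exact: hs.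
  by move: (hw w hwi); rewrite h0 eqxx.
split => //; apply/eqP => Q0.
have hi : (0 : R) < complex.Im ('i%C : C) by rewrite /= ltr01.
by have := key _ _ hi hi; rewrite Q0 !horner0 eqxx.
Qed.


Lemma realC_neq0 (e : R) : e != 0 -> (e%:C)%C != 0 :> C.
Proof. by move=> he; apply: contraNneq he => /(congr1 (@complex.Re R)) /= ->. Qed.

Lemma lemA (w0 : C) : 0 < complex.Im w0 -> T (('X + w0%:P) ^+ n) = 0 ->
  forall g, in_Cn n g -> stable1 (T g) \/ T g = 0.
Proof.
move=> hw0 hT0 g hg.
set d := complex.Im w0.
pose gt := g \Po ('X - w0%:P).
have Hg : forall z, g.[z] = gt.[z + w0].
  by move=> z; rewrite horner_comp hornerD hornerN hornerX hornerC addrK.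
have sgt : (size gt <= n.+1)%N.
  apply: leq_trans (size_comp_poly_leq _ _) _; rewrite size_XsubC muln1 ltnS.
  by move: hg; rewrite /in_Cn -subn1 leq_subLR add1n.
pose M : R := \sum_(k < n.+1) normc gt`_k / d ^+ (n - k).
have M0 : 0 <= M.
  by apply: sumr_ge0 => k _; apply: divr_ge0; [apply: normc_ge0 | apply: exprn_ge0; apply: ltW].
have Hy : forall z : C, 0 < complex.Im z -> d <= normc (z + w0).
  move=> z hz; apply: le_trans (Im_le_normc _); rewrite ImD lerDr; exact: ltW.
have bound : forall z : C, 0 < complex.Im z -> normc g.[z] <= M * normc (z + w0) ^+ n.
  move=> z hz; have hy := Hy z hz; move: hy; set y := z + w0 => hy.
  have y0 : 0 < normc y by apply: lt_le_trans hy.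
  rewrite Hg (horner_coef_wide _ sgt) /M mulr_suml.
  apply: le_trans (normc_sum _ _ _) _; apply: ler_sum => k _.
  rewrite normcM normcX -mulrA; apply: ler_wpM2l; first exact: normc_ge0.
  have hk : (k <= n)%N by rewrite -ltnS.
  have ee : normc y ^+ n = normc y ^+ k * normc y ^+ (n - k) by rewrite -exprD subnKC.
  rewrite ee mulrC -mulrA; apply: ler_peMr; first by apply: exprn_ge0; apply: ltW.
  rewrite ler_pdivlMr ?mul1r; last by apply: exprn_gt0.
  by apply: lerXn2r => //; rewrite nnegrE ltW.
pose e : R := (M + 1)^-1.
have e0 : 0 < e by rewrite invr_gt0 ltr_wpDl.
have eM : e * M < 1.
  by rewrite /e mulrC ltr_pdivrMr ?mul1r ?ltrDl ?ltr01 // ltr_wpDl.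
pose f := ('X + w0%:P) ^+ n + (e%:C)%C *: g.
have fC : in_Cn n f by apply: CnD; [apply: XwN_Cn | apply: CnZ].
have fv : forall z : C, 0 < complex.Im z -> f.[z] != 0.
  move=> z hz; rewrite hornerD hornerZ horner_exp hornerD hornerX hornerC.
  have hy := Hy z hz; have hb := bound z hz.
  move: hy hb; set y := z + w0 => hy hb.
  have y0 : 0 < normc y by apply: lt_le_trans hy.
  apply/eqP => h0.
  have := normcD_ge (y ^+ n) (e%:C%C * g.[z]); rewrite h0 normc0 normcM normc_real normcX.
  rewrite gtr0_norm // => h1.
  have h2 : e * normc g.[z] <= e * (M * normc y ^+ n) by apply: ler_wpM2l => //; apply: ltW.
  have h3 : 0 < normc y ^+ n by apply: exprn_gt0.
  have : normc y ^+ n <= e * M * normc y ^+ n by rewrite -mulrA; apply: le_trans h2; rewrite -subr_le0.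
  by rewrite ler_pMl // leNgt eM.
have fT : T f = (e%:C)%C *: T g by rewrite /f (TD HT) ?hT0 ?add0r ?(TZ HT) //; [apply: XwN_Cn | apply: CnZ].
have enz : (e%:C)%C != 0 :> C by apply: realC_neq0; rewrite gt_eqF.
case: (Hpres fC (stable_of_vals fv)); rewrite fT.
  move=> [nz hv]; left; split.
    by apply: contraNneq nz => ->; rewrite scaler0.
  by move=> z hz; have := hv z hz; rewrite hornerZ; apply: contraNneq => ->; rewrite mulr0.
by move/eqP; rewrite scaler_eq0 (negbTE enz) /= => /eqP; right.
Qed.

Lemma lemB : (forall g, in_Cn n g -> stable1 (T g) \/ T g = 0) ->
  exists (alpha : {poly C} -> C) (P : {poly C}),
    linear_on_Cn n alpha /\ stable1 P /\
    forall f : {poly C}, in_Cn n f -> T f = alpha f *: P.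
Proof.
move=> hS.
have hi : (0 : R) < complex.Im ('i%C : C) by rewrite /= ltr01.
case: (classic (exists g, in_Cn n g /\ T g != 0)) => [[g0 [hg0 nz]]|none].
  case: (hS g0 hg0) => [[_ Pv]|h0]; last by rewrite h0 eqxx in nz.
  pose P := T g0; have Pi := Pv _ hi.
  exists (fun f => (T f).['i%C] / P.['i%C]), P; split; last split.
  - move=> a f g hf hg /=; rewrite HT // hornerD hornerZ.
    by rewrite mulrDl -mulrA.
  - by split.
  - move=> f hf; set c := _ / _.
    have hD : in_Cn n ((- c) *: g0 + f) by apply: CnD => //; apply: CnZ.
    have := hS _ hD; rewrite HT //.
    case => [[_ hv]|h0].
      have := hv _ hi; rewrite hornerD hornerZ /c -/P mulNr divfK // addrC subrr eqxx //.
    by apply/eqP; rewrite -subr_eq0 addrC -scaleNr; apply/eqP.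
have all0 : forall g, in_Cn n g -> T g = 0.
  move=> g hg; apply: NNPP => ne; apply: none; exists g; split => //; exact/eqP.
exists (fun _ => 0), 1; split; last split.
- by move=> a f g _ _; rewrite scaler0 addr0.
- by apply: stable_of_vals => z _; rewrite hornerC oner_eq0.
- by move=> f hf; rewrite scale0r all0.
Qed.

End Hard.


Section Lag.
Variable R : realType.
Local Notation C := R[i].
Local Notation Re := (@complex.Re R).
Local Notation Im := (@complex.Im R).

Lemma invcE (c d : R) : ((c +i* d)%C : C)^-1 =
  ((c / (c ^+ 2 + d ^+ 2)) +i* (- (d / (c ^+ 2 + d ^+ 2))))%C.
Proof. by []. Qed.

Lemma inv_fact (s : R) (y : C) : 0 < s -> s <= Im y ->
  Im (y^-1) <= - s * (Re (y^-1) ^+ 2 + Im (y^-1) ^+ 2).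
Proof.
case: y => c d /= hs hd.
have hn : 0 < c ^+ 2 + d ^+ 2 by rewrite ltr_pwDr ?sqr_ge0 // exprn_gt0 // (lt_le_trans hs).
have e : (c / (c ^+ 2 + d ^+ 2)) ^+ 2 + (- (d / (c ^+ 2 + d ^+ 2))) ^+ 2 =
   (c ^+ 2 + d ^+ 2)^-1 by field; rewrite gt_eqF.
by rewrite e mulNr lerN2 ler_pM2r ?invr_gt0.
Qed.

Lemma cs_step (A B a b S m : R) : 0 <= m -> 0 <= S -> A ^+ 2 + B ^+ 2 <= m * S ->
  (A + a) ^+ 2 + (B + b) ^+ 2 <= (m + 1) * (S + (a ^+ 2 + b ^+ 2)).
Proof.
move=> hm hS h.
have key : 0 <= (A - m * a) ^+ 2 + (B - m * b) ^+ 2 by rewrite addr_ge0 ?sqr_ge0.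
have [m0|mpos] := eqVneq m 0.
  move: h key; rewrite m0 mul0r => h _.
  have hA : A ^+ 2 + B ^+ 2 = 0 by apply/eqP; rewrite eq_le h addr_ge0 ?sqr_ge0.
  have hA2 : A = 0 /\ B = 0.
    by move/eqP: hA; rewrite paddr_eq0 ?sqr_ge0 // !sqrf_eq0 => /andP[/eqP -> /eqP ->].
  case: hA2 => -> ->; rewrite !add0r; lra.
have mp : 0 < m by rewrite lt_def mpos hm.
nra.
Qed.

Lemma cs_step2 (A B a b S m : R) : 0 <= m -> 0 <= S -> A ^+ 2 + B ^+ 2 <= m * S ->
  (a + A) ^+ 2 + (b + B) ^+ 2 <= (m + 1) * ((a ^+ 2 + b ^+ 2) + S).
Proof. by move=> *; rewrite (addrC a) (addrC b) (addrC (_ + _) S); apply: cs_step. Qed.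

Lemma ReD (x y : C) : Re (x + y) = Re x + Re y. Proof. by case: x; case: y. Qed.
Lemma ImDx (x y : C) : Im (x + y) = Im x + Im y. Proof. by case: x; case: y. Qed.

Lemma sum_facts (s : R) (v : C) (rs : seq C) : 0 < s -> s <= Im v ->
  all (fun r => Im r <= 0) rs ->
  let S := \sum_(r <- rs) (v - r)^-1 in
  let S2 := \sum_(r <- rs) (Re ((v - r)^-1) ^+ 2 + Im ((v - r)^-1) ^+ 2) in
  [/\ 0 <= S2, Im S <= - s * S2 & Re S ^+ 2 + Im S ^+ 2 <= (size rs)%:R * S2].
Proof.
move=> hs hv; elim: rs => [|r rs IH] /=.
  by rewrite !big_nil /= => _; split; rewrite ?mulr0 ?mul0r ?expr0n /= ?addr0.
move=> /andP [hr hall]; have [h1 h2 h3] := IH hall.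
rewrite !big_cons ReD ImDx; split.
- by rewrite addr_ge0 // addr_ge0 ?sqr_ge0.
- rewrite mulrDr; apply: lerD => //; apply: inv_fact => //.
  by apply: le_trans hv _; rewrite ImB lerDl oppr_ge0.
- have -> : ((size rs).+1%:R : R) = (size rs)%:R + 1 by rewrite -addn1 natrD.
  by apply: cs_step2 => //; apply: ler0n.
Qed.


Lemma natrC (N : nat) : (N%:R : C) = ((N%:R : R) +i* 0)%C.
Proof.
elim: N => [//|N IH]; rewrite -addn1 !natrD IH.
by apply/eqP; rewrite eq_complex /= addr0 !eqxx.
Qed.

Lemma ReM (x y : C) : Re (x * y) = Re x * Re y - Im x * Im y.
Proof. by case: x; case: y. Qed.
Lemma ImM (x y : C) : Im (x * y) = Re x * Im y + Im x * Re y.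
Proof. by case: x => a b; case: y => c d /=. Qed.

Lemma lag_arith (N : nat) (u v : C) (rs : seq C) : (0 < N)%N ->
  0 < Im u -> 0 < Im v -> all (fun r => Im r <= 0) rs -> (size rs <= N)%N ->
  N%:R + (u - v) * \sum_(r <- rs) (v - r)^-1 != 0.
Proof.
move=> N0 hu hv hall hsz.
have [h1 h2 h3] := sum_facts hv (lexx _) hall.
move: h1 h2 h3; set S := (\sum_(r <- rs) (v - r)^-1); set S2 := (\sum_(r <- rs) (_ + _)) => h1 h2 h3.
have hq : Im (u - v) = Im u - Im v by rewrite ImB.
rewrite natrC; apply/eqP => E.
have ER := congr1 Re E; have EI := congr1 Im E; move: ER EI.
rewrite ReD ImDx ReM ImM /=.
clearbody S S2; move: h2 h3 hq; set a := Re S; set b := Im S; set p := Re (u - v); set q := Im (u - v).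
move=> h2 h3 hq ER EI.
set s := Im v in h2 hq hv.
have Nr : (1 : R) <= N%:R by rewrite ler1n.
have h4 : a ^+ 2 + b ^+ 2 <= N%:R * S2.
  apply: le_trans h3 _; apply: ler_wpM2r => //; by rewrite ler_nat.
have h5 : q * (a ^+ 2 + b ^+ 2) = N%:R * b.
  apply/eqP; rewrite -subr_eq0.
  have -> : q * (a ^+ 2 + b ^+ 2) - N%:R * b = a * (0 + (p * b + q * a)) - b * (N%:R + (p * a - q * b)) by ring.
  by rewrite ER EI !mulr0 subr0.
have h6 : 0 < a ^+ 2 + b ^+ 2.
  rewrite lt_def addr_ge0 ?sqr_ge0 // andbT; apply/eqP => e0.
  have : a = 0 /\ b = 0.
    by move/eqP: e0; rewrite paddr_eq0 ?sqr_ge0 // !sqrf_eq0 => /andP[/eqP -> /eqP ->].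
  by case=> a0 b0; move: ER; rewrite a0 b0 !mulr0 !subr0 addr0 => /eqP; rewrite pnatr_eq0 => /eqP N00; by rewrite N00 in N0.
have h7 : (q + s) * (a ^+ 2 + b ^+ 2) <= 0 by nra.
have : 0 < (q + s) * (a ^+ 2 + b ^+ 2) by apply: mulr_gt0 => //; lra.
by rewrite ltNge h7.
Qed.

End Lag.


Section Lag2.
Variable R : realType.
Local Notation C := R[i].
Local Notation Im := (@complex.Im R).

Lemma root_in_prod (rs : seq C) r : r \in rs ->
  (\prod_(x <- rs) ('X - x%:P)).[r] = 0.
Proof.
move=> hr; rewrite horner_prod; apply/eqP; rewrite prodf_seq_eq0.
by apply/hasP; exists r => //; rewrite hornerXsubC subrr eqxx.
Qed.

Lemma deriv_prod_eval (rs : seq C) (v : C) : all (fun r => v - r != 0) rs ->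
  (\prod_(r <- rs) ('X - r%:P))^`().[v] =
  (\prod_(r <- rs) ('X - r%:P)).[v] * \sum_(r <- rs) (v - r)^-1.
Proof.
elim: rs => [|r rs IH] /=; first by rewrite !big_nil derivC horner0 mulr0.
move=> /andP [hr hall]; rewrite !big_cons derivM derivXsubC mul1r hornerD hornerM IH //.
rewrite hornerM hornerXsubC; field.
exact: hr.
Qed.

Lemma laguerre (N : nat) (g : {poly C}) (u v : C) : (0 < N)%N ->
  (size g <= N.+1)%N -> g != 0 -> (forall w, 0 < Im w -> g.[w] != 0) ->
  0 < Im u -> 0 < Im v ->
  (N%:R *: g + (u%:P - 'X) * g^`()).[v] != 0.
Proof.
move=> N0 hsz g0 hg hu hv.
have [rs Hg] := closed_field_poly_normal g.
move: Hg; set lc := lead_coef g; set p := \prod_(r <- rs) _ => Hg.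
have lc0 : lc != 0 by rewrite lead_coef_eq0.
have hsz' : (size rs <= N)%N.
  by move: hsz; rewrite Hg size_scale // size_prod_XsubC.
have hroots : all (fun r => Im r <= 0) rs.
  apply/allP => r hr; rewrite leNgt; apply/negP => hr'.
  by have := hg r hr'; rewrite Hg hornerZ root_in_prod // mulr0 eqxx.
have hpv : p.[v] != 0.
  by have := hg v hv; rewrite Hg hornerZ; apply: contraNneq => ->; rewrite mulr0.
have hall : all (fun r => v - r != 0) rs.
  apply/allP => r hr; apply: uhp_neq0; rewrite ImB.
  have := allP hroots r hr => /= h; lra.
rewrite Hg derivZ hornerD hornerZ hornerM hornerZ hornerD hornerN hornerX hornerC.
rewrite hornerZ /p deriv_prod_eval // -/p.
have -> : N%:R * (lc * p.[v]) + (u - v) * (lc * (p.[v] * \sum_(r <- rs) (v - r)^-1)) =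
  lc * p.[v] * (N%:R + (u - v) * \sum_(r <- rs) (v - r)^-1) by ring.
by rewrite !mulf_neq0 // lag_arith.
Qed.

End Lag2.


Section Grace.
Variable R : realType.
Local Notation C := R[i].
Local Notation Im := (@complex.Im R).

Definition lagp (N : nat) (u : C) (g : {poly C}) : {poly C} :=
  N%:R *: g + (u%:P - 'X) * g^`().

Lemma lagp_coef N (u : C) (g : {poly C}) k :
  (lagp N u g)`_k = N%:R * g`_k + u * (g`_k.+1 *+ k.+1) - g`_k *+ k.
Proof.
rewrite /lagp coefD coefZ mulrBl coefB coefCM coef_deriv coefXM addrA.
congr (_ - _); case: k => [|k] /=; [by rewrite mulr0n | by rewrite coef_deriv].
Qed.

Lemma size_lagp N (u : C) (g : {poly C}) : (size g <= N.+1)%N -> (size (lagp N u g) <= N)%N.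
Proof.
move=> hg; apply/leq_sizeP => j hj; rewrite lagp_coef.
have g1 : g`_j.+1 = 0 by move/leq_sizeP: hg; apply; rewrite ltnS.
rewrite g1 mul0rn mulr0 addr0.
case: (ltnP N j) => hNj.
  have g0 : g`_j = 0 by move/leq_sizeP: hg; apply.
  by rewrite g0 mulr0 mul0rn subrr.
have -> : j = N by apply/eqP; rewrite eqn_leq hNj hj.
by rewrite mulr_natl subrr.
Qed.


Lemma binR_neq0 n k : (k <= n)%N -> ('C(n, k))%:R != 0 :> C.
Proof. by move=> h; rewrite pnatr_eq0 -lt0n bin_gt0. Qed.

Lemma term_id n k (a g0 g1 u : C) : (k <= n)%N ->
  n.+1%:R * (a * g0 / ('C(n.+1, k))%:R + u * a * g1 / ('C(n.+1, k.+1))%:R) =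
  a * (n.+1%:R * g0 + u * (g1 *+ k.+1) - g0 *+ k) / ('C(n, k))%:R.
Proof.
move=> hk.
have D0 := binR_neq0 hk.
have A0 : ('C(n.+1, k))%:R != 0 :> C by apply: binR_neq0; apply: leqW.
have B0 : ('C(n.+1, k.+1))%:R != 0 :> C by apply: binR_neq0.
have N0 : (n.+1%:R : C) != 0 by rewrite pnatr_eq0.
have ND0 : (n.+1%:R * ('C(n, k))%:R : C) != 0 by rewrite mulf_neq0.
have cb1 : ('C(n.+1, k))%:R * (n.+1%:R - k%:R) = n.+1%:R * ('C(n, k))%:R :> C.
  rewrite -natrB; last by apply: leqW.
  by rewrite -!natrM mulnC -mul_bin_down.
have cb2 : ('C(n.+1, k.+1))%:R * k.+1%:R = n.+1%:R * ('C(n, k))%:R :> C.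
  by rewrite -!natrM mulnC -mul_bin_diag.
have iA : (('C(n.+1, k))%:R : C)^-1 = (n.+1%:R - k%:R) / (n.+1%:R * ('C(n, k))%:R).
  apply: (mulfI A0); rewrite mulfV // mulrA cb1 mulfV //.
have iB : (('C(n.+1, k.+1))%:R : C)^-1 = k.+1%:R / (n.+1%:R * ('C(n, k))%:R).
  apply: (mulfI B0); rewrite mulfV // mulrA cb2 mulfV //.
rewrite iA iB -[g1 *+ _]mulr_natr -[g0 *+ _]mulr_natr; field.
by rewrite D0 addrC natr1 pnatr_eq0.
Qed.


Lemma pair_step n (u : C) (f1 g : {poly C}) : (size f1 <= n.+1)%N ->
  n.+1%:R * pair n.+1 (('X + u%:P) * f1) g = pair n f1 (lagp n.+1 u g).
Proof.
move=> hf.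
have fcoef : forall j, (('X + u%:P) * f1)`_j =
    (if j is j'.+1 then f1`_j' else 0) + u * f1`_j.
  by move=> j; rewrite mulrDl coefD coefXM coefCM; case: j.
rewrite /pair.
transitivity (n.+1%:R * \sum_(k < n.+1) (f1`_(n - k) * g`_k / ('C(n.+1, k))%:R +
    u * f1`_(n - k) * g`_k.+1 / ('C(n.+1, k.+1))%:R)).
  congr (_ * _); rewrite big_split /=.
  under eq_bigr do rewrite fcoef mulrDl mulrDl.
  rewrite big_split /=; congr (_ + _).
    rewrite big_ord_recr /= subnn /= !mul0r addr0.
    apply: eq_bigr => k _; rewrite subSn //; by rewrite -ltnS.
  rewrite big_ord_recl /= subn0.
  have -> : f1`_n.+1 = 0 by move/leq_sizeP: hf; apply.
  rewrite mulr0 !mul0r add0r; apply: eq_bigr => k _.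
  by rewrite /bump /= subSS add1n.
rewrite mulr_sumr; apply: eq_bigr => k _; rewrite lagp_coef term_id //.
by rewrite -ltnS.
Qed.


Lemma lagp_vals N (u : C) (g : {poly C}) : (0 < N)%N ->
  (size g <= N.+1)%N -> g != 0 -> (forall w, 0 < Im w -> g.[w] != 0) ->
  0 < Im u -> forall v, 0 < Im v -> (lagp N u g).[v] != 0.
Proof. by move=> *; apply: laguerre. Qed.

Lemma grace (bs : seq C) (g : {poly C}) : all (fun b => Im b < 0) bs ->
  (size g <= (size bs).+1)%N -> g != 0 -> (forall w, 0 < Im w -> g.[w] != 0) ->
  pair (size bs) (\prod_(b <- bs) ('X - b%:P)) g != 0.
Proof.
elim: bs g => [|b bs IH] g /=.
  move=> _ hg g0 _; rewrite /pair big_ord1 big_nil /= coef1 mul1r bin0 divr1.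
  by move: g0; rewrite (size1_polyC hg) polyC_eq0 coefC eqxx.
move=> /andP [hb hall] hg g0 gv.
have hi : (0 : R) < Im ('i%C : C) by rewrite /= ltr01.
have hu : 0 < Im (- b) by rewrite ImN oppr_gt0.
have hv := lagp_vals (ltn0Sn _) hg g0 gv hu.
have h0 : lagp (size bs).+1 (- b) g != 0.
  by apply: contraTneq (hv _ hi) => ->; rewrite horner0 eqxx.
have := IH _ hall (size_lagp _ hg) h0 hv.
rewrite -pair_step; last by rewrite size_prod_XsubC.
rewrite big_cons polyCN; apply: contraNneq => ->; by rewrite mulr0.
Qed.

End Grace.


Section Hur.
Variable R : realType.
Local Notation C := R[i].
Local Notation Im := (@complex.Im R).

Lemma prod_bound (rs : seq C) (z0 t : C) : all (fun r => Im r <= 0) rs ->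
  normc t <= Im z0 ->
  normc (\prod_(r <- rs) (z0 + t - r)) <= 2 ^+ (size rs) * normc (\prod_(r <- rs) (z0 - r)).
Proof.
move=> hall ht; elim: rs hall => [|r rs IH] /=; first by rewrite !big_nil expr0 mul1r.
move=> /andP [hr hall]; rewrite !big_cons !normcM exprS.
have h1 : normc (z0 + t - r) <= 2 * normc (z0 - r).
  have e : z0 + t - r = (z0 - r) + t by rewrite addrAC.
  rewrite e; apply: le_trans (le_normcD _ _) _.
  have : normc t <= normc (z0 - r).
    apply: le_trans ht _; apply: le_trans (Im_le_normc _); rewrite ImB; lra.
  by move=> h; have := normc_ge0 (z0 - r); lra.
have h2 := IH hall.
have -> : 2 * 2 ^+ size rs * (normc (z0 - r) * normc (\prod_(j <- rs) (z0 - j))) =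
  (2 * normc (z0 - r)) * (2 ^+ size rs * normc (\prod_(j <- rs) (z0 - j))) by ring.
by apply: ler_pM => //; apply: normc_ge0.
Qed.


Lemma poly_bound (p : {poly C}) (z0 t : C) : p != 0 ->
  (forall w, 0 < Im w -> p.[w] != 0) -> normc t <= Im z0 ->
  normc p.[z0 + t] <= 2 ^+ (size p) * normc p.[z0].
Proof.
move=> p0 pv ht.
have [rs Hp] := closed_field_poly_normal p.
move: Hp; set lc := lead_coef p => Hp.
have lc0 : lc != 0 by rewrite lead_coef_eq0.
have hroots : all (fun r => Im r <= 0) rs.
  apply/allP => r hr; rewrite leNgt; apply/negP => hr'.
  by have := pv r hr'; rewrite Hp hornerZ root_in_prod // mulr0 eqxx.
have ev : forall x, p.[x] = lc * \prod_(r <- rs) (x - r).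
  move=> x; rewrite Hp hornerZ horner_prod; congr (_ * _).
  by apply: eq_bigr => r _; rewrite hornerXsubC.
rewrite !ev !normcM.
have hs : (size rs < size p)%N by rewrite Hp size_scale // size_prod_XsubC.
have h2 : (2 : R) ^+ size rs <= 2 ^+ size p.
  by rewrite ler_eXn2l ?ltr1n // ltnW.
have h3 := prod_bound hroots ht.
have n1 := normc_ge0 lc; have n2 := normc_ge0 (\prod_(r <- rs) (z0 - r)).
rewrite mulrCA; apply: ler_wpM2l => //.
apply: le_trans h3 _; apply: ler_wpM2r => //.
Qed.


Lemma hurwitz_lin (a b : {poly C}) :
  (forall e : R, 0 < e -> a + (e%:C)%C *: b = 0 \/
     forall z, 0 < Im z -> (a + (e%:C)%C *: b).[z] != 0) ->
  a = 0 \/ forall z, 0 < Im z -> a.[z] != 0.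
Proof.
move=> H.
case: (eqVneq a 0) => [->|a0]; [by left | right].
move=> z0 hz0; apply/negP => /eqP az0.
have [eta [eta0 Heta]] : exists eta : R, 0 < eta /\
    forall e, 0 < e -> e < eta -> a + (e%:C)%C *: b != 0.
  case: (classic (exists e0 : R, 0 < e0 /\ a + (e0%:C)%C *: b = 0)) => [[e0 [he0 E0]]|none].
    exists e0; split => // e he hlt; apply/eqP => E.
    have ee : (a + (e%:C)%C *: b) - (a + (e0%:C)%C *: b) = ((e%:C)%C - (e0%:C)%C) *: b.
      by rewrite scalerBl opprD addrACA subrr add0r.
    have : ((e%:C)%C - (e0%:C)%C) *: b = 0 by rewrite -ee E E0 subrr.
    move/eqP; rewrite scaler_eq0 => /orP [|/eqP b0].
      rewrite subr_eq0 => /eqP /(congr1 (@complex.Re R)) /= ee2.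
      by move: hlt; rewrite ee2 ltxx.
    by move: E0 a0; rewrite b0 scaler0 addr0 => ->; rewrite eqxx.
  exists 1; split => // e he _; apply/eqP => E; apply: none; exists e; split => //.
have hv : forall e, 0 < e -> e < eta -> forall z, 0 < Im z -> (a + (e%:C)%C *: b).[z] != 0.
  move=> e he hlt; case: (H e he) => // E.
  by move: (Heta e he hlt); rewrite E eqxx.
have Hvan : forall t : R, 0 <= t -> t <= Im z0 -> a.[z0 + (t%:C)%C] = 0.
  move=> t t0 tle; set A := normc a.[z0 + (t%:C)%C].
  case: (eqVneq A 0) => [/eq0_normc //|A0].
  have Apos : 0 < A by rewrite lt_def A0 normc_ge0.
  pose N := (size a + size b)%N.
  pose K := normc b.[z0 + (t%:C)%C] + 2 ^+ N * normc b.[z0].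
  have K0 : 0 <= K by rewrite addr_ge0 ?normc_ge0 // mulr_ge0 ?exprn_ge0 ?normc_ge0.
  pose e := Num.min (eta / 2) (A / (2 * (K + 1))).
  have he0 : 0 < e by rewrite lt_min divr_gt0 //= divr_gt0 // mulr_gt0 // ltr_wpDl.
  have heta : e < eta.
    have h : e <= eta / 2 by rewrite ge_min lexx.
    by apply: le_lt_trans h _; rewrite ltr_pdivrMr // ltr_pMr // ltr1n.
  have heA : e * (2 * (K + 1)) <= A.
    by rewrite -ler_pdivlMr ?mulr_gt0 ?ltr_wpDl // ge_min lexx orbT.
  have hK : e * K < A by nra.
  set p := a + (e%:C)%C *: b.
  have p0 := Heta e he0 heta; have pv := hv e he0 heta.
  have ht : normc (t%:C)%C <= Im z0 by rewrite normc_real ger0_norm.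
  have hb := poly_bound p0 pv ht.
  have hsz : (size p <= N)%N.
    apply: leq_trans (size_polyD _ _) _; rewrite geq_max leq_addr /=.
    by apply: leq_trans (size_scale_leq _ _) _; rewrite leq_addl.
  have h2 : (2 : R) ^+ size p <= 2 ^+ N by rewrite ler_eXn2l ?ltr1n.
  have pz0 : p.[z0] = (e%:C)%C * b.[z0] by rewrite /p hornerD hornerZ az0 add0r.
  have ea : a.[z0 + (t%:C)%C] = p.[z0 + (t%:C)%C] - (e%:C)%C * b.[z0 + (t%:C)%C].
    by rewrite /p hornerD hornerZ addrK.
  have hA : A <= normc p.[z0 + (t%:C)%C] + e * normc b.[z0 + (t%:C)%C].
    rewrite /A ea; apply: le_trans (le_normcD _ _) _.
    by rewrite normcN normcM normc_real (ger0_norm (ltW he0)).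
  move: hb; rewrite pz0 normcM normc_real (ger0_norm (ltW he0)) => hb.
  have nb0 := normc_ge0 b.[z0]; have nbt := normc_ge0 b.[z0 + (t%:C)%C].
  have h3 : 2 ^+ size p * (e * normc b.[z0]) <= 2 ^+ N * (e * normc b.[z0]).
    by apply: ler_wpM2r => //; rewrite mulr_ge0 // ltW.
  have : A <= e * K.
    rewrite /K mulrDr; apply: le_trans hA _; rewrite addrC lerD2l.
    apply: le_trans hb _; apply: le_trans h3 _; rewrite mulrCA lexx //.
  by rewrite leNgt hK.
pose rs := mkseq (fun k => z0 + ((Im z0 / (k.+1)%:R)%:C)%C) (size a).
have hroot : all (root a) rs.
  apply/allP => x /mapP [k _ ->]; rewrite /root; apply/eqP; apply: Hvan.
    by rewrite divr_ge0 // ltW.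
  rewrite ler_pdivrMr ?ltr0Sn //; apply: ler_peMr; [exact: ltW | by rewrite ler1n].
have hu : uniq rs.
  apply: mkseq_uniq => i j /addrI /(congr1 (@complex.Re R)) /= e.
  have hz : Im z0 != 0 by rewrite gt_eqF.
  move: e => /(mulfI hz) /invr_inj /eqP; rewrite eqr_nat eqSS => /eqP //.
have := max_poly_roots a0 hroot hu.
by rewrite size_mkseq ltnn.
Qed.

End Hur.


Section Key.
Variable R : realType.
Local Notation C := R[i].
Local Notation Im := (@complex.Im R).
Variable n : nat.
Variable T : {poly C} -> {poly C}.
Hypothesis HT : linear_on_Cn n T.
Hypothesis Hs : stable2 (Text T (zw_pow R n)).

Definition pp (bs : seq C) : {poly C} := \prod_(b <- bs) ('X - b%:P).

Lemma Cn_pp bs : (size bs <= n)%N -> in_Cn n (pp bs).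
Proof. by rewrite /in_Cn /pp size_prod_XsubC ltnS. Qed.

Lemma gz_props z : 0 < Im z ->
  [/\ (size (gz n T z) <= n.+1)%N, gz n T z != 0 & forall w, 0 < Im w -> (gz n T z).[w] != 0].
Proof.
move=> hz.
have hw : forall w, 0 < Im w -> (gz n T z).[w] != 0.
  move=> w hwi; rewrite (gz_eval HT); case: Hs => _; apply => //.
split => //; first exact: size_gz.
have hi : (0 : R) < Im ('i%C : C) by rewrite /= ltr01.
by apply: contraTneq (hw _ hi) => ->; rewrite horner0 eqxx.
Qed.

Lemma key_base bs : all (fun b => Im b < 0) bs -> size bs = n ->
  forall z, 0 < Im z -> (T (pp bs)).[z] != 0.
Proof.
move=> hall hsz z hz.
rewrite (pair_T HT); last by apply: Cn_pp; rewrite hsz.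
have [h1 h2 h3] := gz_props hz.
rewrite -hsz; apply: grace => //; by rewrite hsz.
Qed.


Lemma rel1 (r c : C) (q : {poly C}) :
  ('X - (r - c)%:P) * q = ('X - r%:P) * q + c *: q.
Proof. by rewrite polyCB opprB [c%:P - _]addrC addrA mulrDl mul_polyC. Qed.

Lemma rel2 (e : R) (q : {poly C}) : e != 0 ->
  (- ((e%:C)%C * 'i%C)) *: (('X - ((0 +i* (- e^-1))%C)%:P) * q) =
  q + (e%:C)%C *: (- 'i%C *: ('X * q)).
Proof.
move=> e0.
have c1 : (e%:C)%C * 'i%C * (0 +i* (- e^-1))%C = 1 :> C.
  apply/eqP; rewrite eq_complex /=; apply/andP; split; apply/eqP; field => //.
rewrite mulrBl scalerBr mul_polyC scalerA mulNr c1 scaleN1r opprK addrC.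
congr (_ + _); by rewrite scalerA mulrN.
Qed.

Lemma ImM' (x y : C) : Im (x * y) = complex.Re x * Im y + Im x * complex.Re y.
Proof. by case: x => a b; case: y => c d /=. Qed.

Lemma key k : forall bs, (size bs <= n)%N -> all (fun b => Im b <= 0) bs ->
  ((n - size bs) + count (fun b => Im b == 0%R) bs)%N = k ->
  T (pp bs) = 0 \/ forall z, 0 < Im z -> (T (pp bs)).[z] != 0.
Proof.
elim: k => [|k IH] bs hsz hall hk.
  move/eqP: hk; rewrite addn_eq0 => /andP [h1 /eqP h2].
  right; apply: key_base.
    apply/allP => b hb; rewrite lt_neqAle (allP hall b hb) andbT.
    apply/negP => hb0.
    have : has (fun b => Im b == 0%R) bs by apply/hasP; exists b.
    by rewrite has_count h2.
  by apply/eqP; rewrite eqn_leq hsz /= -subn_eq0.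
have [hc|hc] := boolP (has (fun b => Im b == 0) bs).
  have [r hr rre] := hasP hc.
  set rest := rem r bs; set q := pp rest.
  have Hpp : pp bs = ('X - r%:P) * q by rewrite /pp (perm_big _ (perm_to_rem hr)) big_cons.
  have srest : size rest = (size bs).-1 by rewrite size_rem.
  have hsb : (0 < size bs)%N by case: (bs) hr.
  have hqC : in_Cn n q by apply: Cn_pp; rewrite srest; lia.
  have hppC : in_Cn n (pp bs) by apply: Cn_pp.
  apply: (hurwitz_lin (b := T ('i%C *: q))) => e he.
  pose beta := r - (e%:C)%C * 'i%C.
  have Hrel : pp (beta :: rest) = pp bs + (e%:C)%C *: ('i%C *: q).
    by rewrite /pp big_cons -/(pp rest) rel1 -/(pp bs) Hpp scalerA.
  have -> : T (pp bs) + (e%:C)%C *: T ('i%C *: q) = T (pp (beta :: rest)).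
    rewrite Hrel (TD HT) // ?(TZ HT) //; do 2 apply: CnZ => //.
  apply: IH => /=.
  - by rewrite srest; lia.
  - apply/andP; split.
      rewrite /beta ImB ImM' /= mul0r addr0 mulr1.
      have := eqP rre; lra.
    apply/allP => b hb; apply: (allP hall); exact: mem_rem hb.
  - have hIb : (Im beta == 0) = false.
      rewrite /beta ImB ImM' /= mul0r addr0 mulr1 (eqP rre) sub0r oppr_eq0.
      by rewrite gt_eqF.
    rewrite hIb add0n /rest count_rem hr rre /= srest.
    have : (0 < count (fun b => Im b == 0%R) bs)%N by rewrite -has_count.
    lia.
have hc0 : count (fun b => Im b == 0) bs = 0%N by move: hc; rewrite has_count lt0n negbK => /eqP.
have hlt : (size bs < n)%N by move: hk; rewrite hc0; lia.
have hppC : in_Cn n (pp bs) by apply: Cn_pp.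
have hXC : in_Cn n ('X * pp bs).
  rewrite /in_Cn; apply: leq_trans (size_polyMleq _ _) _.
  by rewrite /pp size_prod_XsubC size_polyX; lia.
apply: (hurwitz_lin (b := T (- 'i%C *: ('X * pp bs)))) => e he.
pose beta : C := (0 +i* (- e^-1))%C.
have e0 : e != 0 by rewrite gt_eqF.
have c0 : (- ((e%:C)%C * 'i%C)) != 0 :> C.
  by rewrite oppr_eq0 mulf_neq0 // ?realC_neq0 //; apply/eqP => /(congr1 (@complex.Im R)) /=; apply/eqP; rewrite oner_eq0.
have -> : T (pp bs) + (e%:C)%C *: T (- 'i%C *: ('X * pp bs)) =
    (- ((e%:C)%C * 'i%C)) *: T (pp (beta :: bs)).
  have hbC : in_Cn n (pp (beta :: bs)) by apply: Cn_pp.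
  rewrite -(TZ HT _ hbC).
  rewrite /pp big_cons -/(pp bs) rel2 // (TD HT) ?(TZ HT) //; do 2 apply: CnZ => //.
have IHb := IH (beta :: bs).
case: IHb => /=.
- by [].
- rewrite /beta /= oppr_le0 invr_ge0 ltW //=.
- have hIb : (- e^-1 == 0) = false by rewrite oppr_eq0 invr_eq0 (negbTE e0).
  by rewrite hIb add0n hc0; lia.
- by move=> ->; left; rewrite scaler0.
move=> hv; right => z hz; rewrite hornerZ mulf_neq0 //; exact: hv.
Qed.

End Key.


Lemma pres_b (R : realType) (n : nat) (T : {poly R[i]} -> {poly R[i]})
  (HT : linear_on_Cn n T) : stable2 (Text T (zw_pow R n)) -> preserves_stability n T.
Proof.
move=> Hs f hf [f0 fv].
have [rs Hf] := closed_field_poly_normal f.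
move: Hf; set lc := lead_coef f => Hf.
have lc0 : lc != 0 by rewrite lead_coef_eq0.
have hroots : all (fun r => complex.Im r <= 0) rs.
  apply/allP => r hr; rewrite leNgt; apply/negP => hr'.
  by have := fv r hr'; rewrite Hf hornerZ root_in_prod // mulr0 eqxx.
have hsz : (size rs <= n)%N.
  by move: hf; rewrite /in_Cn Hf size_scale // size_prod_XsubC.
have hpC : in_Cn n (pp rs) by apply: Cn_pp.
have := @key _ _ _ HT Hs _ rs hsz hroots (erefl _).
have -> : T f = lc *: T (pp rs) by rewrite Hf -(TZ HT).
case => [->|hv]; first by right; rewrite scaler0.
left; apply: stable_of_vals => z hz; rewrite hornerZ mulf_neq0 //; exact: hv.
Qed.

Theorem mainTheorem3 (R : realType) (n : nat)
    (T : {poly R[i]} -> {poly R[i]}) (HT : linear_on_Cn n T) :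
  preserves_stability n T <->
  ((exists (alpha : {poly R[i]} -> R[i]) (P : {poly R[i]}),
       linear_on_Cn n alpha /\ stable1 P /\
       forall f : {poly R[i]}, in_Cn n f -> T f = alpha f *: P)
   \/ stable2 (Text T (zw_pow R n))).
Proof.
split.
  move=> Hp.
  case: (classic (exists w0 : R[i], 0 < complex.Im w0 /\ T (('X + w0%:P) ^+ n) = 0)).
    move=> [w0 [hw0 hT0]]; left; apply: (lemB HT).
    exact: (lemA HT Hp hw0 hT0).
  move=> none; right; apply: (caseA HT Hp) => w hw; apply/eqP => h0.
  by apply: none; exists w.
case => [[alpha [P [ha [[P0 Pv] hT]]]]|Hs]; last exact: pres_b.
move=> f hf _; rewrite hT //.
case: (eqVneq (alpha f) 0) => [->|a0]; first by right; rewrite scale0r.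
left; apply: stable_of_vals => z hz; rewrite hornerZ mulf_neq0 //; exact: Pv.
Qed.
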